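(* Let $\varepsilon>0$, and consider a colouring of the edges of the complete bipartite graph $K_{n,n}$ with parts $X,Y$ (each of size $n$) in red and blue such that every vertex of $X$ is incident to at least $\varepsilon n$ red edges and every vertex of $Y$ is incident to at least $\varepsilon n$ blue edges. Then this colouring contains at least $\varepsilon^4n^4/150$ distinct copies of $M_1$.
   Context: $M_1$ is the properly $2$-edge-coloured $K_{2,2}$, i.e. a $4$-cycle whose edges are alternately red and blue. *)

(* Defs.v *)
From mathcomp Require Import all_boot all_order all_algebra.
Set Implicit Arguments. Unset Strict Implicit. Unset Printing Implicit Defensive.

(* A red/blue colouring of the edges of K_{n,n} with parts X = 'I_n and
   Y = 'I_n: c x y = true means the edge xy (x in X, y in Y) is red,
   false means blue. *)

(* The 4-cycle spanned by Xs = {x1,x2} and Ys = {y1,y2} (the only K_{2,2}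
   on these vertices) is a copy of M_1, i.e. its edges x1y1, y1x2, x2y2,
   y2x1 are alternately red and blue. *)
Definition is_M1_copy (n : nat) (c : 'I_n -> 'I_n -> bool)
  (Xs Ys : {set 'I_n}) : bool :=
  [exists x1 : 'I_n, exists x2 : 'I_n, exists y1 : 'I_n, exists y2 : 'I_n,
     [&& x1 != x2, y1 != y2, Xs == [set x1; x2], Ys == [set y1; y2],
         c x1 y1 == c x2 y2, c x2 y1 == c x1 y2 & c x1 y1 != c x2 y1]].

Definition M1_copies (n : nat) (c : 'I_n -> 'I_n -> bool)
  : {set {set 'I_n} * {set 'I_n}} :=
  [set p | is_M1_copy c p.1 p.2].

(* Main.v *)
Require Import Defs.
From mathcomp Require Import all_boot all_order all_algebra.
From mathcomp Require Import ring lra.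
Import Order.TTheory GRing.Theory Num.Theory.
Set Implicit Arguments. Unset Strict Implicit. Unset Printing Implicit Defensive.

Lemma card_sum (T : finType) (P : pred T) : #|[set y | P y]| = \sum_y (P y : nat).
Proof.
rewrite -sum1_card big_mkcond /=; apply: eq_bigr => i _; rewrite inE.
by case: (P i).
Qed.

Lemma swap4 (I : finType) (F : I -> I -> I -> I -> nat) :
  \sum_a \sum_b \sum_c \sum_d F a b c d = \sum_c \sum_d \sum_a \sum_b F a b c d.
Proof.
rewrite pair_big /=.
under eq_bigr => p _ do rewrite pair_big /=.
rewrite exchange_big /= pair_big /=.
symmetry; rewrite pair_big /=.
under eq_bigr => p _ do rewrite pair_big /=.
by rewrite pair_big.
Qed.


Definition uu n (c : 'I_n -> 'I_n -> bool) (x z : 'I_n) : nat :=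
  \sum_y (c x y && ~~ c z y).
Definition rr n (c : 'I_n -> 'I_n -> bool) x : nat := \sum_y (c x y : nat).
Definition ww n (c : 'I_n -> 'I_n -> bool) (y y' : 'I_n) : nat :=
  \sum_x (c x y && ~~ c x y').
Definition cb n (c : 'I_n -> 'I_n -> bool) (y y' : 'I_n) : nat :=
  \sum_x (~~ c x y && ~~ c x y').
Definition bl n (c : 'I_n -> 'I_n -> bool) y : nat := \sum_x (~~ c x y : nat).
Definition rho n (c : 'I_n -> 'I_n -> bool) x : nat :=
  \sum_z (rr c z < rr c x).
Definition QQ n (c : 'I_n -> 'I_n -> bool) : nat :=
  \sum_x \sum_z uu c x z * uu c z x.
Definition ZZ n (c : 'I_n -> 'I_n -> bool) x y y' : nat :=
  \sum_z ((rr c x <= rr c z) && ~~ c z y && ~~ c z y').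

Lemma prod_sum n (F G : 'I_n -> nat) :
  (\sum_y F y) * (\sum_y' G y') = \sum_y \sum_y' F y * G y'.
Proof.
rewrite big_distrl /=; apply: eq_bigr => y _; by rewrite big_distrr.
Qed.

Lemma QQ_ww n (c : 'I_n -> 'I_n -> bool) :
  QQ c = \sum_y \sum_y' ww c y y' * ww c y' y.
Proof.
rewrite /QQ /ww.
under eq_bigr do under eq_bigr do rewrite /uu prod_sum.
rewrite swap4; apply: eq_bigr => y _; apply: eq_bigr => y' _.
rewrite prod_sum; apply: eq_bigr => x _; apply: eq_bigr => z _.
by case: (c x y); case: (c z y); case: (c x y'); case: (c z y').
Qed.

Lemma QQ_ge n (c : 'I_n -> 'I_n -> bool) (L : {set 'I_n}) :
  \sum_y \sum_y' \sum_x ((x \in L) * (c x y && c x y') * ZZ c x y y')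
  <= QQ c.
Proof.
have -> : \sum_y \sum_y' \sum_x ((x \in L) * (c x y && c x y') * ZZ c x y y')
  = \sum_y \sum_y' \sum_x \sum_z ((x \in L) * ((rr c x <= rr c z) *
      ((c x y && ~~ c z y) * (c x y' && ~~ c z y')))).
  apply: eq_bigr => y _; apply: eq_bigr => y' _; apply: eq_bigr => x _.
  rewrite /ZZ big_distrr /=; apply: eq_bigr => z _.
  by case: (x \in L); case: (c x y); case: (c z y); case: (c x y'); case: (c z y');
     case: (rr c x <= rr c z).
rewrite swap4 /QQ; apply: leq_sum => x _; apply: leq_sum => z _.
rewrite (_ : \sum_a _ = (x \in L) * (rr c x <= rr c z) * (uu c x z * uu c x z)); last first.
  rewrite /uu prod_sum big_distrr /=; apply: eq_bigr => a _.
  rewrite big_distrr /=; apply: eq_bigr => b _.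
  by rewrite mulnA.
case: (x \in L) => /=; rewrite ?mul0n // ?mul1n.
case: (boolP (rr c x <= rr c z)) => h /=; rewrite ?mul0n // ?mul1n.
apply: leq_mul => //.
have e1 : rr c x = \sum_y ((c x y && c z y) : nat) + uu c x z.
  rewrite /rr /uu -big_split /=; apply: eq_bigr => y _.
  by case: (c x y); case: (c z y).
have e2 : rr c z = \sum_y ((c x y && c z y) : nat) + uu c z x.
  rewrite /rr /uu -big_split /=; apply: eq_bigr => y _.
  by case: (c x y); case: (c z y).
by move: h; rewrite e1 e2 leq_add2l.
Qed.

Lemma ZZ_ge n (c : 'I_n -> 'I_n -> bool) x y y' :
  cb c y y' <= ZZ c x y y' + rho c x.
Proof.
rewrite /cb /ZZ /rho -big_split /=; apply: leq_sum => z _.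
by case: (leqP (rr c x) (rr c z)); case: (c z y); case: (c z y').
Qed.

Lemma ww_ge n (c : 'I_n -> 'I_n -> bool) y y' :
  bl c y' <= ww c y y' + cb c y y'.
Proof.
rewrite /bl /ww /cb -big_split /=; apply: leq_sum => x _.
by case: (c x y); case: (c x y').
Qed.

Lemma cb_sym n (c : 'I_n -> 'I_n -> bool) y y' : cb c y y' = cb c y' y.
Proof. by apply: eq_bigr => x _; rewrite andbC. Qed.

Lemma sum_k n (c : 'I_n -> 'I_n -> bool) (L : {set 'I_n}) :
  \sum_y \sum_y' \sum_x ((x \in L) * (c x y && c x y')) =
  \sum_x (x \in L) * (rr c x * rr c x).
Proof.
under eq_bigr do rewrite exchange_big /=.
rewrite exchange_big /=; apply: eq_bigr => x _.
rewrite /rr prod_sum big_distrr /=; apply: eq_bigr => y _.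
rewrite big_distrr /=; apply: eq_bigr => y' _.
by case: (c x y); case: (c x y').
Qed.

Lemma k_le n (c : 'I_n -> 'I_n -> bool) (L : {set 'I_n}) y y' :
  \sum_x ((x \in L) * (c x y && c x y')) <= #|L|.
Proof.
rewrite -sum1_card [X in _ <= X]big_mkcond /=; apply: leq_sum => x _.
by case: (x \in L); case: (c x y && c x y').
Qed.

Lemma rr_card n (c : 'I_n -> 'I_n -> bool) x : rr c x = #|[set y | c x y]|.
Proof. by rewrite card_sum. Qed.

Lemma bl_card n (c : 'I_n -> 'I_n -> bool) y : bl c y = #|[set x | ~~ c x y]|.
Proof. by rewrite card_sum. Qed.

Lemma rr_le n (c : 'I_n -> 'I_n -> bool) x : rr c x <= n.
Proof. by rewrite rr_card; apply: leq_trans (max_card _) _; rewrite card_ord. Qed.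

Lemma pair_inj n (a b a' b' : 'I_n) : a != b -> a' != b' ->
  [set a; b] = [set a'; b'] -> (a < b) = (a' < b') -> a = a' /\ b = b'.
Proof.
move=> nab nab' E lt.
have ha : a \in [set a'; b'] by rewrite -E set21.
have hb : b \in [set a'; b'] by rewrite -E set22.
move: ha hb; rewrite !inE => /orP[] /eqP ha /orP[] /eqP hb; subst => //.
- by rewrite eqxx in nab.
- exfalso; move: lt nab'; case: (ltngtP a' b') => // h _.
  by rewrite (val_inj h) eqxx.
- by rewrite eqxx in nab.
Qed.

Definition good n (c : 'I_n -> 'I_n -> bool) (q : ('I_n * 'I_n) * ('I_n * 'I_n)) :=
  [&& c q.1.1 q.2.1, ~~ c q.1.2 q.2.1, c q.1.2 q.2.2 & ~~ c q.1.1 q.2.2].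

Lemma QQ_card n (c : 'I_n -> 'I_n -> bool) : QQ c = #|[set q | good c q]|.
Proof.
rewrite card_sum /QQ.
under eq_bigr do under eq_bigr do rewrite /uu prod_sum.
rewrite pair_big /=.
under eq_bigr => p _ do rewrite pair_big /=.
rewrite pair_big /=; apply: eq_bigr => q _.
rewrite /good.
by case: (c q.1.1 q.2.1); case: (c q.1.2 q.2.1); case: (c q.1.2 q.2.2);
   case: (c q.1.1 q.2.2).
Qed.

Lemma QQ_copies n (c : 'I_n -> 'I_n -> bool) : QQ c <= 4 * #|M1_copies c|.
Proof.
rewrite QQ_card.
pose f (q : ('I_n * 'I_n) * ('I_n * 'I_n)) :=
  (([set q.1.1; q.1.2], [set q.2.1; q.2.2]), (q.1.1 < q.1.2, q.2.1 < q.2.2)).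
have neq1 q : good c q -> q.1.1 != q.1.2.
  case/and4P => h1 h2 _ _; apply/eqP => e; by rewrite e (negbTE h2) in h1.
have neq2 q : good c q -> q.2.1 != q.2.2.
  case/and4P => h1 _ _ h4; apply/eqP => e; by rewrite e (negbTE h4) in h1.
rewrite -(card_in_imset (f := f)); last first.
  move=> [[x z] [y y']] [[x' z'] [y1 y1']]; rewrite !inE => g g' E; case: E => E1 E2 E3 E4.
  have /= [-> ->] := pair_inj (neq1 _ g) (neq1 _ g') E1 E3.
  by have /= [-> ->] := pair_inj (neq2 _ g) (neq2 _ g') E2 E4.
rewrite mulnC (_ : 4 = #|[set: bool * bool]|); last by rewrite cardsT card_prod card_bool.
rewrite -cardsX; apply: subset_leq_card; apply/subsetP => t.
case/imsetP => -[[x z] [y y']]; rewrite inE => g ->.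
rewrite !inE andbT /is_M1_copy /=.
apply/existsP; exists x; apply/existsP; exists z; apply/existsP; exists y.
apply/existsP; exists y'.
rewrite (neq1 _ g) (neq2 _ g) !eqxx /=.
by case/and4P: g => /= -> /negbTE -> -> /negbTE ->.
Qed.


Local Open Scope ring_scope.

Lemma card_sum2 (T : finType) (A : {set T}) : #|A| = (\sum_x (x \in A : nat))%N.
Proof.
rewrite -sum1_card big_mkcond /=; apply: eq_bigr => i _; by case: (i \in A).
Qed.

Lemma L_big (R : realFieldType) n (c : 'I_n -> 'I_n -> bool) (e : R) :
  (0 < n)%N -> (forall x, e <= (rr c x)%:R) ->
  e / 4 <= #|[set x | 4 * (rho c x)%:R < e]|%:R.
Proof.
move=> n0 he.
set L := [set x | _].
case: (leP (e/4) (#|L|%:R)) => // hlt; exfalso.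
case: (pickP (fun x => x \notin L)) => [x0 hx0 | hall].
- case: (@arg_minnP _ x0 (fun x => x \notin L) (rr c) hx0) => x hx hmin.
  have hrho : (rho c x <= #|L|)%N.
    rewrite /rho card_sum2; apply: leq_sum => z _.
    case: ltnP => h //=; case: (boolP (z \in L)) => // hz.
    by have := hmin z hz; rewrite leqNgt h.
  have : 4 * (rho c x)%:R < e.
    have : (rho c x)%:R <= #|L|%:R :> R by rewrite ler_nat.
    lra.
  by move=> h; move: hx; rewrite inE h.
- have hn : #|L| = n.
    have -> : L = [set: 'I_n].
      by apply/setP => x; rewrite in_setT; apply: negbFE; exact: hall.
    by rewrite cardsT card_ord.
  have h1 := he (Ordinal n0).
  have h2 : (rr c (Ordinal n0))%:R <= n%:R :> R by rewrite ler_nat rr_le.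
  have h3 : 0 <= n%:R :> R by [].
  move: hlt; rewrite hn; lra.
Qed.


Theorem lemma3p6 (R : realFieldType) (eps : R) (n : nat)
  (c : 'I_n -> 'I_n -> bool) :
  0 < eps ->
  (forall x : 'I_n, eps * n%:R <= #|[set y : 'I_n | c x y]|%:R) ->
  (forall y : 'I_n, eps * n%:R <= #|[set x : 'I_n | ~~ c x y]|%:R) ->
  eps ^+ 4 * n%:R ^+ 4 / 150%:R <= #|M1_copies c|%:R.
Proof.
move=> eps0 hr hb.
case: (posnP n) => [n0 | n0].
  have -> : n%:R = 0 :> R by rewrite n0.
  by rewrite expr0n /= mulr0 mul0r.
rewrite -exprMn.
set e := eps * n%:R.
have e0 : 0 < e by rewrite mulr_gt0 // ltr0n.
have hr' x : e <= (rr c x)%:R by rewrite rr_card.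
have hb' y : e <= (bl c y)%:R by rewrite bl_card.
set L := [set x | 4 * (rho c x)%:R < e].
have hL : e / 4 <= #|L|%:R by apply: L_big.
set l : R := #|L|%:R.
have pair y y' :
  e ^+ 2 / 4 * (\sum_x ((x \in L) * (c x y && c x y')))%N%:R <=
  e * (\sum_x ((x \in L) * (c x y && c x y') * ZZ c x y y'))%N%:R
  + l * (ww c y y' * ww c y' y)%N%:R.
  set k := (\sum_x _)%N. set X := (\sum_x _)%N.
  have hX : k%:R * ((cb c y y')%:R - e / 4) <= X%:R :> R.
    set C := (cb c y y')%:R.
    rewrite /X /k !natr_sum mulr_suml; apply: ler_sum => x _.
    case: (boolP (x \in L)) => hx; case: (c x y && c x y') => /=;
      rewrite ?mul0n ?mul1n ?mul0r //.
    rewrite mul1r.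
    have h1 := ZZ_ge c x y y'.
    have h2 : C <= (ZZ c x y y')%:R + (rho c x)%:R :> R.
      by rewrite -natrD ler_nat.
    have h3 : 4 * (rho c x)%:R < e by move: hx; rewrite inE.
    lra.
  have hk : k%:R <= l by rewrite ler_nat k_le.
  have k0 : 0 <= k%:R :> R by [].
  have X0 : 0 <= X%:R :> R by [].
  have Y0 : 0 <= (ww c y y' * ww c y' y)%N%:R :> R by [].
  have l0 : 0 <= l by [].
  case: (leP (e / 2) (cb c y y')%:R) => hc.
  - have : k%:R * (e / 4) <= X%:R :> R.
      apply: le_trans hX; rewrite ler_wpM2l //; lra.
    move=> h.
    have : e * (k%:R * (e / 4)) <= e * X%:R by rewrite ler_wpM2l // ltW.
    have : 0 <= l * (ww c y y' * ww c y' y)%N%:R by rewrite mulr_ge0.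
    move=> h4 h5.
    have -> : e ^+ 2 / 4 * k%:R = e * (k%:R * (e / 4)) by rewrite expr2; field.
    lra.
  - have w1 : e / 2 <= (ww c y y')%:R :> R.
      have := ww_ge c y y'; rewrite -(ler_nat R) natrD => h.
      have := hb' y'; lra.
    have w2 : e / 2 <= (ww c y' y)%:R :> R.
      have := ww_ge c y' y; rewrite -(ler_nat R) natrD cb_sym => h.
      have := hb' y; lra.
    have hY : e / 2 * (e / 2) <= (ww c y y' * ww c y' y)%N%:R :> R.
      rewrite natrM; apply: ler_pM => //; lra.
    have : l * (e / 2 * (e / 2)) <= l * (ww c y y' * ww c y' y)%N%:R
      by rewrite ler_wpM2l.
    have : k%:R * (e / 2 * (e / 2)) <= l * (e / 2 * (e / 2)).
      by rewrite ler_wpM2r // mulr_ge0 //; lra.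
    have : 0 <= e * X%:R by rewrite mulr_ge0 // ltW.
    move=> h4 h5 h6.
    have -> : e ^+ 2 / 4 * k%:R = k%:R * (e / 2 * (e / 2)) by rewrite expr2; field.
    lra.
have S1 : \sum_y \sum_y' (e ^+ 2 / 4 * (\sum_x ((x \in L) * (c x y && c x y')))%N%:R)
  <= \sum_y \sum_y' (e * (\sum_x ((x \in L) * (c x y && c x y') * ZZ c x y y'))%N%:R
  + l * (ww c y y' * ww c y' y)%N%:R).
  by apply: ler_sum => y _; apply: ler_sum => y' _; exact: pair.
have E1 : \sum_y \sum_y' (e ^+ 2 / 4 * (\sum_x ((x \in L) * (c x y && c x y')))%N%:R)
   = e ^+ 2 / 4 * (\sum_x (x \in L) * (rr c x * rr c x))%N%:R.
  rewrite -sum_k [in RHS]natr_sum mulr_sumr; apply: eq_bigr => y _.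
  by rewrite [in RHS]natr_sum mulr_sumr.
have E2 : \sum_y \sum_y' (e * (\sum_x ((x \in L) * (c x y && c x y') * ZZ c x y y'))%N%:R
  + l * (ww c y y' * ww c y' y)%N%:R) =
  e * (\sum_y \sum_y' \sum_x ((x \in L) * (c x y && c x y') * ZZ c x y y'))%N%:R
  + l * (\sum_y \sum_y' ww c y y' * ww c y' y)%N%:R.
  rewrite [X in e * X]natr_sum [X in l * X]natr_sum mulr_sumr mulr_sumr -big_split /=.
  apply: eq_bigr => y _.
  rewrite [X in e * X]natr_sum [X in l * X]natr_sum mulr_sumr mulr_sumr -big_split /=.
  done.
have K : l * e ^+ 2 <= (\sum_x (x \in L) * (rr c x * rr c x))%N%:R.
  rewrite /l card_sum2 !natr_sum mulr_suml; apply: ler_sum => x _.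
  case: (x \in L) => /=; rewrite ?mul0r ?mul0n // mul1n mul1r natrM expr2.
  by apply: ler_pM => //; apply: ltW.
have Q1 := QQ_ge c L.
rewrite -QQ_ww in E2.
move: S1; rewrite E1 E2.
set Kv := (\sum_x _)%N%:R.
set Xs := (\sum_y _)%N%:R.
set Q := (QQ c)%:R.
move=> S1.
have hXs : Xs <= Q by rewrite ler_nat.
have e2 : 0 <= e ^+ 2 / 4 by apply: divr_ge0 => //; apply: exprn_ge0; apply: ltW.
have h1 : e ^+ 2 / 4 * (l * e ^+ 2) <= e ^+ 2 / 4 * Kv by rewrite ler_wpM2l.
have h2 : e * Xs <= e * Q by rewrite ler_wpM2l // ltW.
have Qb : l * e ^+ 4 / 4 <= (e + l) * Q.
  have -> : l * e ^+ 4 / 4 = e ^+ 2 / 4 * (l * e ^+ 2).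
    by rewrite !exprS expr0; field.
  lra.
have e4 : 0 <= e ^+ 4 by rewrite exprn_ge0 // ltW.
have h3 : e ^+ 4 * e <= e ^+ 4 * (4 * l).
  by rewrite ler_wpM2l //; lra.
have h4 : (e + l) * (e ^+ 4 / 20) <= (e + l) * Q.
  apply: le_trans Qb.
  have -> : (e + l) * (e ^+ 4 / 20) = (e ^+ 4 * e + e ^+ 4 * l) / 20.
    by field.
  have -> : l * e ^+ 4 / 4 = (e ^+ 4 * (4 * l) + e ^+ 4 * l) / 20.
    by field.
  lra.
have h5 : e ^+ 4 / 20 <= Q.
  by move: h4; rewrite ler_pM2l //; lra.
have h6 : Q <= 4 * (#|M1_copies c|)%:R.
  by rewrite /Q -natrM ler_nat; apply: QQ_copies.
have h7 : 0 <= e ^+ 4 / 150 by apply: divr_ge0.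
lra.
Qed.
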